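(* Let $m,n\in\mathbb N$, $M_A=M_m(\mathbb C)$, $M_B=M_n(\mathbb C)$, let $U_A\in M_A$, $U_B\in M_B$ be unitary matrices, and let $\psi:M_A\to M_B$ be a quantum $(U_A,U_B)$-channel. Then the following are equivalent: (1) $\psi$ is $(U_A,U_B)$-entanglement breaking; (2) $\psi$ is in $(U_A,U_B)$-Holevo form.
   Context: For a unitary $U\in M_k(\mathbb C)$, a matrix $X$ is $U$-positive if $U^*X\ge0$; $X$ is a $U$-density matrix (quantum $U$-state) if moreover $\mathrm{Tr}(U^*X)=1$. For $r\in\mathbb N$, $U^r=\mathrm{diag}(U,\dots,U)$. A linear map $\psi:M_A\to M_B$ is $(U_A,U_B)$-CP if for every $r$ and every $V=[V_{ij}]\in M_r(M_A)$ with $(U_A^r)^*V\ge0$ one has $(U_B^r)^*[\psi(V_{ij})]\ge0$; it is a quantum $(U_A,U_B)$-channel if it is $(U_A,U_B)$-CP and $\phi(V):=U_B^*\psi(U_AV)$ is trace preserving (i.e. $\phi$ is a quantum channel). For unitaries $W_1\in M_p(\mathbb C)$, $W_2\in M_q(\mathbb C)$, a quantum $W_1\otimes W_2$-state $\rho\in M_p\otimes M_q$ is $W_1\otimes W_2$-separable if it is a convex combination of quantum $W_1\otimes W_2$-states of the form $\rho_1\otimes\rho_2$ with $\rho_1$ $W_1$-positive and $\rho_2$ $W_2$-positive. $\psi$ is $(U_A,U_B)$-entanglement breaking if for every $k\in\mathbb N$ and every $I_k\otimes U_A$-density matrix $S\in M_k(\mathbb C)\otimes M_A$, the matrix $(\mathrm{id}_k\otimes\psi)(S)$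 is $I_k\otimes U_B$-separable. $\psi$ is in $(U_A,U_B)$-Holevo form if $\psi(\rho)=\sum_k D_k\,\mathrm{Tr}(F_k\rho)$ for all $\rho\in M_A$ (finite sum), where each $D_k\in M_B$ is a $U_B$-density matrix and $\{F_k\}\subset M_A$ is a $U_A$-positive operator valued measure, i.e. each $F_kU_A$ is positive semidefinite and $\sum_kF_kU_A=I_A$. *)

(* Defs.v *)
(* The complex field is modelled as R[i] (real_closed's
   `complex`) for an arbitrary R : realType (any realType is a model of the
   real numbers, so R[i] is a model of C). *)
From HB Require Import structures.
From mathcomp Require Import all_boot all_order all_algebra.
From mathcomp Require Import reals.
From mathcomp Require Import complex mxtens.
Set Implicit Arguments. Unset Strict Implicit. Unset Printing Implicit Defensive.
Import Order.TTheory GRing.Theory Num.Theory.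
Local Open Scope ring_scope.

Section QDefs.
Variable R : realType.
Local Notation C := R[i].

Definition adjmx (p q : nat) (A : 'M[C]_(p, q)) : 'M[C]_(q, p) :=
  (map_mx Num.conj A)^T.

Definition is_unitary_mx (p : nat) (U : 'M[C]_p) : Prop :=
  U *m adjmx U = 1%:M /\ adjmx U *m U = 1%:M.

Definition psdmx (p : nat) (X : 'M[C]_p) : Prop :=
  adjmx X = X /\ forall v : 'cV[C]_p, 0 <= (adjmx v *m X *m v) 0 0.

Definition Upos (p : nat) (U X : 'M[C]_p) : Prop := psdmx (adjmx U *m X).

Definition Udensity (p : nat) (U X : 'M[C]_p) : Prop :=
  Upos U X /\ \tr (adjmx U *m X) = 1.

(* M_r(M_p) is identified with M_r ⊗ M_p = 'M_(r*p) via the Kronecker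
   convention of mxtens (E_ij ⊗ Y = block matrix with Y in block (i,j)). *)
(* U^r = diag(U,...,U) = I_r ⊗ U *)
Definition Upow (r p : nat) (U : 'M[C]_p) : 'M[C]_(r * p) := (1%:M : 'M[C]_r) *t U.

Definition blk (r p : nat) (V : 'M[C]_(r * p)) (i j : 'I_r) : 'M[C]_p :=
  \matrix_(a, b) V (mxtens_index (i, a)) (mxtens_index (j, b)).

(* id_r ⊗ psi, i.e. [V_ij] |-> [psi(V_ij)] *)
Definition ampl (r p q : nat) (psi : 'M[C]_p -> 'M[C]_q) (V : 'M[C]_(r * p))
  : 'M[C]_(r * q) :=
  \sum_(i < r) \sum_(j < r) (delta_mx i j *t psi (blk V i j)).

Definition UCP (p q : nat) (UA : 'M[C]_p) (UB : 'M[C]_q)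
  (psi : 'M[C]_p -> 'M[C]_q) : Prop :=
  forall (r : nat) (V : 'M[C]_(r * p)),
    psdmx (adjmx (Upow r UA) *m V) ->
    psdmx (adjmx (Upow r UB) *m ampl psi V).

Definition Uchannel (p q : nat) (UA : 'M[C]_p) (UB : 'M[C]_q)
  (psi : {linear 'M[C]_p -> 'M[C]_q}) : Prop :=
  UCP UA UB psi /\
  forall V : 'M[C]_p, \tr (adjmx UB *m psi (UA *m V)) = \tr V.

Definition Useparable (p q : nat) (W1 : 'M[C]_p) (W2 : 'M[C]_q)
  (rho : 'M[C]_(p * q)) : Prop :=
  Udensity (W1 *t W2) rho /\
  exists (N : nat) (lam : 'I_N -> C) (r1 : 'I_N -> 'M[C]_p) (r2 : 'I_N -> 'M[C]_q),
    [/\ forall k, 0 <= lam k,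
        \sum_(k < N) lam k = 1,
        forall k, [/\ Udensity (W1 *t W2) (r1 k *t r2 k), Upos W1 (r1 k)
                    & Upos W2 (r2 k)]
      & rho = \sum_(k < N) lam k *: (r1 k *t r2 k)].

Definition Uentanglement_breaking (p q : nat) (UA : 'M[C]_p) (UB : 'M[C]_q)
  (psi : 'M[C]_p -> 'M[C]_q) : Prop :=
  forall (k : nat) (S : 'M[C]_(k * p)),
    Udensity ((1%:M : 'M[C]_k) *t UA) S ->
    Useparable (1%:M : 'M[C]_k) UB (ampl psi S).

Definition UHolevo_form (p q : nat) (UA : 'M[C]_p) (UB : 'M[C]_q)
  (psi : 'M[C]_p -> 'M[C]_q) : Prop :=
  exists (N : nat) (D : 'I_N -> 'M[C]_q) (F : 'I_N -> 'M[C]_p),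
    [/\ forall k, Udensity UB (D k),
        forall k, psdmx (F k *m UA),
        \sum_(k < N) F k *m UA = 1%:M
      & forall rho : 'M[C]_p, psi rho = \sum_(k < N) \tr (F k *m rho) *: D k].

End QDefs.

(* Main.v *)
Require Import Defs.
From HB Require Import structures.
From mathcomp Require Import all_boot all_order all_algebra.
From mathcomp Require Import reals.
From mathcomp Require Import complex mxtens spectral sesquilinear.
From mathcomp Require Import ring.
Set Implicit Arguments. Unset Strict Implicit. Unset Printing Implicit Defensive.
Import Order.TTheory GRing.Theory Num.Theory.
Local Open Scope ring_scope.
Section S.
Variable R : realType.
Local Notation C := R[i].
Local Notation cj := (@Num.conj C).

Lemma adjmxE p q (A : 'M[C]_(p, q)) i j : adjmx A i j = cj (A j i).
Proof. by rewrite !mxE. Qed.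

Lemma adjmxK p q (A : 'M[C]_(p, q)) : adjmx (adjmx A) = A.
Proof. by apply/matrixP => i j; rewrite !adjmxE conjCK. Qed.

Lemma adjmx_mul p q s (A : 'M[C]_(p, q)) (B : 'M[C]_(q, s)) :
  adjmx (A *m B) = adjmx B *m adjmx A.
Proof. by rewrite /adjmx map_mxM trmx_mul. Qed.

Lemma adjmx_tens p q s t (A : 'M[C]_(p, q)) (B : 'M[C]_(s, t)) :
  adjmx (A *t B) = adjmx A *t adjmx B.
Proof. by rewrite /adjmx map_mxT trmx_tens. Qed.

Lemma adjmx1 p : adjmx (1%:M : 'M[C]_p) = 1%:M.
Proof. by rewrite /adjmx map_mx1 trmx1. Qed.

Definition gram (I : finType) p (d : I -> C) (u : I -> 'I_p -> C) : 'M[C]_p :=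
  \matrix_(i, j) \sum_l d l * (u l i * cj (u l j)).

Lemma qfE p (A : 'M[C]_p) (v : 'cV[C]_p) :
  (adjmx v *m A *m v) 0 0 = \sum_i \sum_j (cj (v i 0) * A i j * v j 0).
Proof.
rewrite !mxE; under eq_bigr do rewrite !mxE mulr_suml.
rewrite exchange_big /=; apply: eq_bigr => i _; apply: eq_bigr => j _.
by rewrite !mxE.
Qed.

Lemma qf_gram (I : finType) p (d : I -> C) (u : I -> 'I_p -> C) (v : 'cV[C]_p) :
  (adjmx v *m gram d u *m v) 0 0 =
  \sum_l d l * ((\sum_i cj (v i 0) * u l i) * cj (\sum_i cj (v i 0) * u l i)).
Proof.
rewrite qfE.
under [LHS]eq_bigr do under eq_bigr do rewrite mxE mulr_sumr mulr_suml.
under [LHS]eq_bigr do rewrite exchange_big.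
rewrite [LHS]exchange_big /=.
under [RHS]eq_bigr do rewrite rmorph_sum mulr_suml mulr_sumr.
apply: eq_bigr => l _; apply: eq_bigr => i _.
rewrite !mulr_sumr; apply: eq_bigr => j _.
rewrite rmorphM /= conjCK; ring.
Qed.

Lemma psd_gram (I : finType) p (d : I -> C) (u : I -> 'I_p -> C) :
  (forall l, 0 <= d l) -> psdmx (gram d u).
Proof.
move=> d0; split.
  apply/matrixP => i j; rewrite adjmxE !mxE rmorph_sum; apply: eq_bigr => l _.
  by rewrite !rmorphM /= conjCK geC0_conj // (mulrC (cj _)).
move=> v; rewrite qf_gram; apply: sumr_ge0 => l _.
by apply: mulr_ge0 => //; apply: mul_conjC_ge0.
Qed.

Lemma psd_decomp p (A : 'M[C]_p) : psdmx A ->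
  exists (d : 'I_p -> C) (u : 'I_p -> 'I_p -> C),
    (forall l, 0 <= d l) /\ A = gram d u.
Proof.
move=> [hA qA].
have tA : (A ^t* )%sesqui = A by rewrite -[RHS]hA /adjmx map_trmx.
have nA : A \is normalmx by apply/normalmxP; rewrite tA.
move/orthomx_spectralP: nA.
set P := spectralmx A; set sp := spectral_diag A => eA.
have uP : P \is unitarymx by apply: spectral_unitarymx.
have PP : P *m (P ^t* )%sesqui = 1%:M by apply/unitarymxP.
rewrite invmx_unitary // in eA.
pose d l := sp 0 l; pose u l i := cj (P l i).
have Ag : A = gram d u.
  apply/matrixP=> i j; rewrite {1}eA mul_mx_diag !mxE.
  apply: eq_bigr => l _; rewrite !mxE /d /u conjCK; ring.
exists d, u; split => // l.
have := qA (\col_i u l i); rewrite Ag qf_gram.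
have wE k : \sum_i cj ((\col_i0 u l i0) i 0) * u k i = (l == k)%:R.
  have /matrixP/(_ l k) := PP; rewrite !mxE => <-.
  by apply: eq_bigr => i _; rewrite !mxE /u conjCK.
under eq_bigr do rewrite wE.
rewrite (bigD1 l) //= big1 ?addr0; last first.
  by move=> k /negbTE; rewrite eq_sym => ->; rewrite mul0r mulr0.
by rewrite eqxx /= conjC1 !mulr1.
Qed.

Lemma sum_tens (V : nmodType) r p (f : 'I_(r * p) -> V) :
  \sum_t f t = \sum_(i < r) \sum_(a < p) f (mxtens_index (i, a)).
Proof.
rewrite pair_big /= (reindex (@mxtens_index r p)) /=; last first.
  by exists (@mxtens_unindex r p) => x _; rewrite (mxtens_indexK, mxtens_unindexK).
by apply: eq_bigr => -[i a].
Qed.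

Lemma gram_tr (I : finType) p (d : I -> C) (u : I -> 'I_p -> C) :
  \tr (gram d u) = \sum_l d l * \sum_i (u l i * cj (u l i)).
Proof.
rewrite /mxtrace; under eq_bigr do rewrite mxE.
rewrite exchange_big /=; apply: eq_bigr => l _; by rewrite mulr_sumr.
Qed.

Lemma psd_tr_ge0 p (A : 'M[C]_p) : psdmx A -> 0 <= \tr A.
Proof.
move=> /psd_decomp [d [u [d0 ->]]]; rewrite gram_tr.
apply: sumr_ge0 => l _; apply: mulr_ge0 => //; apply: sumr_ge0 => i _.
exact: mul_conjC_ge0.
Qed.

Lemma psd_tr0 p (A : 'M[C]_p) : psdmx A -> \tr A = 0 -> A = 0.
Proof.
move=> /psd_decomp [d [u [d0 ->]]]; rewrite gram_tr => h.
have h1 l : d l * \sum_i (u l i * cj (u l i)) = 0.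
  apply: (psumr_eq0P _ h) => // k _; apply: mulr_ge0 => //.
  by apply: sumr_ge0 => i _; exact: mul_conjC_ge0.
apply/matrixP => i j; rewrite !mxE; apply: big1 => l _.
have [->|dn0] := eqVneq (d l) 0; first by rewrite mul0r.
move/eqP: (h1 l); rewrite mulf_eq0 (negbTE dn0) /= => /eqP h2.
have h3 k : u l k * cj (u l k) = 0.
  by apply: (psumr_eq0P _ h2) => // k' _; exact: mul_conjC_ge0.
have h4 : u l i = 0 by move/eqP: (h3 i); rewrite mul_conjC_eq0 => /eqP.
by rewrite h4 !mul0r mulr0.
Qed.

Lemma psd_trmx p (A : 'M[C]_p) : psdmx A -> psdmx A^T.
Proof.
move=> /psd_decomp [d [u [d0 ->]]].
have -> : (gram d u)^T = gram d (fun l i => cj (u l i)).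
  apply/matrixP => i j; rewrite !mxE; apply: eq_bigr => l _.
  by rewrite conjCK (mulrC (u l j)).
exact: psd_gram.
Qed.

Lemma psd_scale p (c : C) (A : 'M[C]_p) : 0 <= c -> psdmx A -> psdmx (c *: A).
Proof.
move=> c0 /psd_decomp [d [u [d0 ->]]].
have -> : c *: gram d u = gram (fun l => c * d l) u.
  apply/matrixP => i j; rewrite !mxE mulr_sumr; apply: eq_bigr => l _.
  by rewrite mulrA.
by apply: psd_gram => l; apply: mulr_ge0.
Qed.

Lemma psd_add p (A B : 'M[C]_p) : psdmx A -> psdmx B -> psdmx (A + B).
Proof.
move=> [hA qA] [hB qB]; split.
  by apply/matrixP => i j; rewrite adjmxE !mxE rmorphD /= -!adjmxE hA hB.
move=> v; rewrite mulmxDr mulmxDl mxE; exact: addr_ge0.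
Qed.

Lemma psd0 p : psdmx (0 : 'M[C]_p).
Proof.
split; first by apply/matrixP => i j; rewrite adjmxE !mxE conjC0.
by move=> v; rewrite mulmx0 mul0mx mxE.
Qed.

Lemma psd_sum (I : finType) p (F : I -> 'M[C]_p) :
  (forall k, psdmx (F k)) -> psdmx (\sum_k F k).
Proof.
move=> h; apply: (big_ind (fun X => psdmx X)) => //; [exact: psd0|exact: psd_add].
Qed.

Lemma psd_tens p q (A : 'M[C]_p) (B : 'M[C]_q) :
  psdmx A -> psdmx B -> psdmx (A *t B).
Proof.
move=> /psd_decomp [d [u [d0 ->]]] /psd_decomp [e [w [e0 ->]]].
have -> : gram d u *t gram e w =
   gram (fun lk : 'I_p * 'I_q => d lk.1 * e lk.2)
        (fun lk s => u lk.1 (@mxtens_unindex p q s).1 * w lk.2 (@mxtens_unindex p q s).2).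
  apply/matrixP => s t; rewrite !mxE mulr_suml.
  under eq_bigr do rewrite mulr_sumr.
  rewrite pair_big /=; apply: eq_bigr => -[l k] _ /=.
  rewrite rmorphM /=; ring.
by apply: psd_gram => -[l k]; apply: mulr_ge0.
Qed.

Lemma mxtensP r p q s (A B : 'M[C]_(r * p, q * s)) :
  (forall i a j b, A (mxtens_index (i, a)) (mxtens_index (j, b)) =
                   B (mxtens_index (i, a)) (mxtens_index (j, b))) -> A = B.
Proof.
move=> h; apply/matrixP => x y.
case: (mxtens_indexP x) => i a; case: (mxtens_indexP y) => j b; exact: h.
Qed.

Lemma idx_eq r p (i j : 'I_r) (a b : 'I_p) :
  (mxtens_index (i, a) == mxtens_index (j, b)) = (i == j) && (a == b).
Proof. by rewrite (inj_eq (can_inj (@mxtens_indexK r p))) xpair_eqE. Qed.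

Lemma tens11 r p : (1%:M : 'M[C]_r) *t (1%:M : 'M[C]_p) = 1%:M.
Proof.
apply: mxtensP => i a j b; rewrite tensmxE !mxE idx_eq.
by case: (i == j); case: (a == b); rewrite ?mulr1n ?mulr0n ?mulr1 ?mulr0.
Qed.

Lemma ampl_E r p q (psi : 'M[C]_p -> 'M[C]_q) (V : 'M[C]_(r * p)) i a j b :
  ampl psi V (mxtens_index (i, a)) (mxtens_index (j, b)) = psi (blk V i j) a b.
Proof.
rewrite /ampl summxE (bigD1 i) //= [X in _ + X]big1 ?addr0; last first.
  move=> i' /negbTE hi; rewrite summxE big1 // => j' _.
  by rewrite tensmxE mxE eq_sym hi mul0r.
rewrite summxE (bigD1 j) //= [X in _ + X]big1 ?addr0; last first.
  by move=> j' /negbTE hj; rewrite tensmxE mxE (eq_sym j) hj andbF mul0r.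
by rewrite tensmxE mxE !eqxx mul1r.
Qed.

Lemma blk_mul r p (U : 'M[C]_p) (V : 'M[C]_(r * p)) i j :
  blk ((1%:M *t U) *m V) i j = U *m blk V i j.
Proof.
apply/matrixP => a b; rewrite !mxE sum_tens (bigD1 i) //= [X in _ + X]big1 ?addr0; last first.
  move=> i' /negbTE hi; apply: big1 => c _.
  by rewrite tensmxE !mxE eq_sym hi mulr0n mul0r mul0r.
by apply: eq_bigr => c _; rewrite tensmxE !mxE eqxx mul1r.
Qed.

Lemma tr_blk r p (V : 'M[C]_(r * p)) : \tr V = \sum_i \tr (blk V i i).
Proof.
rewrite /mxtrace sum_tens; apply: eq_bigr => i _; apply: eq_bigr => a _.
by rewrite mxE.
Qed.

Lemma tr_tens p q (A : 'M[C]_p) (B : 'M[C]_q) : \tr (A *t B) = \tr A * \tr B.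
Proof.
rewrite /mxtrace mulr_sum; apply: eq_bigr => t _; by rewrite mxE.
Qed.

Lemma adj1t r p (U : 'M[C]_p) : adjmx ((1%:M : 'M[C]_r) *t U) = 1%:M *t adjmx U.
Proof. by rewrite adjmx_tens adjmx1. Qed.

Lemma tr_delta p (A : 'M[C]_p) i j : \tr (A *m delta_mx j i) = A i j.
Proof.
rewrite /mxtrace (bigD1 i) //= big1 ?addr0; last first.
  move=> k /negbTE hk; rewrite mxE big1 // => l _; rewrite mxE hk andbF mulr0 //.
rewrite mxE (bigD1 j) //= big1 ?addr0; last first.
  by move=> l /negbTE hl; rewrite mxE hl mulr0.
by rewrite mxE !eqxx mulr1.
Qed.
End S.

Section S2.
Variable R : realType.
Local Notation C := R[i].
Local Notation cj := (@Num.conj C).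

Lemma sig_gram r m (g : 'I_m -> C) (x : 'I_m -> 'I_m -> C)
   (pp : 'I_(r * m) -> C) (y : 'I_(r * m) -> 'I_(r * m) -> C) i j :
  \tr (gram g x *m blk (gram pp y) i j) =
  (\sum_l g l *: gram pp (fun t i => \sum_c cj (x l c) * y t (mxtens_index (i, c)))) i j.
Proof.
rewrite /mxtrace summxE.
under eq_bigr => b _ do rewrite mxE.
under eq_bigr => b _ do under eq_bigr => c _ do rewrite !mxE mulr_suml.
under eq_bigr => b _ do rewrite exchange_big /=.
rewrite exchange_big /=.
apply: eq_bigr => l _; rewrite !mxE mulr_sumr.
under eq_bigr => b _ do under eq_bigr => c _ do rewrite mulr_sumr.
under eq_bigr => b _ do rewrite exchange_big /=.
rewrite exchange_big /=; apply: eq_bigr => t _.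
rewrite rmorph_sum big_distrlr /= exchange_big /= !mulr_sumr.
apply: eq_bigr => b _; rewrite !mulr_sumr; apply: eq_bigr => c _.
rewrite rmorphM /= conjCK; ring.
Qed.

Lemma tensZl p q s t (c : C) (A : 'M[C]_(p, q)) (B : 'M[C]_(s, t)) :
  (c *: A) *t B = c *: (A *t B).
Proof. by apply/matrixP => u v; rewrite !mxE mulrA. Qed.

Lemma psd1 r : psdmx (1%:M : 'M[C]_r).
Proof.
have -> : (1%:M : 'M[C]_r) = gram (fun _ : 'I_r => 1) (fun l i => (l == i)%:R).
  apply/matrixP => i j; rewrite !mxE (bigD1 i) //= big1 ?addr0; last first.
    by move=> k /negbTE hk; rewrite hk mul0r mulr0.
  by rewrite eqxx mul1r mul1r; case: (i == j); rewrite /= ?conjC1 ?conjC0.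
by apply: psd_gram => _; exact: ler01.
Qed.

Lemma holevo_EB m n (UA : 'M[C]_m) (UB : 'M[C]_n) (psi : 'M[C]_m -> 'M[C]_n) :
  is_unitary_mx UA -> UHolevo_form UA UB psi -> Uentanglement_breaking UA UB psi.
Proof.
move=> [UAa UAb] [N [D [F [HD HF HS Hpsi]]]] r S [HP trP].
set P := adjmx (1%:M *t UA) *m S in HP trP.
have SP : S = (1%:M *t UA) *m P.
  by rewrite /P mulmxA adj1t tensmx_mul mul1mx UAa tens11 mul1mx.
pose sig k : 'M[C]_r := \matrix_(i, j) \tr (F k *m blk S i j).
have sigE k i j : sig k i j = \tr ((F k *m UA) *m blk P i j).
  by rewrite mxE SP blk_mul mulmxA.
have sig_psd k : psdmx (sig k).
  have [g [x [g0 Gx]]] := psd_decomp (HF k).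
  have [pp [y [p0 Py]]] := psd_decomp HP; rewrite -/P in Py.
  have -> : sig k = \sum_l g l *: gram pp
      (fun t i => \sum_c cj (x l c) * y t (mxtens_index (i, c))).
    by apply/matrixP => i j; rewrite sigE Gx Py sig_gram.
  by apply: psd_sum => l; apply: psd_scale => //; exact: psd_gram.
pose lam k := \tr (sig k).
have lam0 k : 0 <= lam k by apply: psd_tr_ge0.
have lam1 : \sum_k lam k = 1.
  rewrite -trP tr_blk /lam /mxtrace exchange_big /=; apply: eq_bigr => i _.
  under eq_bigr do rewrite sigE.
  by rewrite -raddf_sum /= -mulmx_suml HS mul1mx.
have rhoE : ampl psi S = \sum_k sig k *t D k.
  apply: mxtensP => i a j b; rewrite ampl_E Hpsi !summxE; apply: eq_bigr => k _.
  by rewrite tensmxE !mxE.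
have r0 : (0 < r)%N.
  rewrite lt0n; apply/negP => /eqP r0'; move: trP; rewrite tr_blk big1.
    by move=> /esym/eqP; rewrite oner_eq0.
  by case=> i0 hi; exfalso; move: hi; rewrite r0'.
pose tau : 'M[C]_r := (r%:R)^-1 *: 1%:M.
have taup : psdmx tau by apply: psd_scale; [rewrite invr_ge0 ler0n|exact: psd1].
have taut : \tr tau = 1.
  by rewrite mxtraceZ mxtrace1 mulVf // pnatr_eq0 -lt0n.
pose r1 k := if lam k == 0 then tau else (lam k)^-1 *: sig k.
have r1p k : psdmx (r1 k).
  rewrite /r1; case: eqP => // _; apply: psd_scale => //; by rewrite invr_ge0.
have r1t k : \tr (r1 k) = 1.
  rewrite /r1; case: eqP => // /eqP h; by rewrite mxtraceZ mulVf.
have prodU k : adjmx ((1%:M : 'M[C]_r) *t UB) *m (r1 k *t D k) =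
    r1 k *t (adjmx UB *m D k).
  by rewrite adj1t tensmx_mul mul1mx.
split.
  split.
    rewrite /Upos rhoE mulmx_sumr; apply: psd_sum => k.
    rewrite adj1t tensmx_mul mul1mx; apply: psd_tens => //.
    by case: (HD k).
  rewrite rhoE mulmx_sumr raddf_sum /= -[RHS]lam1; apply: eq_bigr => k _.
  rewrite adj1t tensmx_mul mul1mx tr_tens; by case: (HD k) => _ ->; rewrite mulr1.
exists N, lam, r1, D; split => //.
- move=> k; split; last by case: (HD k).
  + split; rewrite /Upos prodU; last by rewrite tr_tens r1t; case: (HD k) => _ ->; rewrite mulr1.
    apply: psd_tens => //; by case: (HD k).
  + by rewrite /Upos adjmx1 mul1mx.
- rewrite rhoE; apply: eq_bigr => k _; rewrite /r1; case: eqP => [h|/eqP h].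
    by rewrite (psd_tr0 (sig_psd k) h) tens0mx h scale0r.
  by rewrite tensZl scalerA mulfV // scale1r.
Qed.

Lemma EB_holevo m n (UA : 'M[C]_m) (UB : 'M[C]_n) (psi : {linear 'M[C]_m -> 'M[C]_n}) :
  is_unitary_mx UA ->
  (forall V : 'M[C]_m, \tr (adjmx UB *m psi (UA *m V)) = \tr V) ->
  Uentanglement_breaking UA UB psi -> UHolevo_form UA UB psi.
Proof.
move=> [UAa UAb] TP EB.
have [m0|mpos] := posnP m.
  subst m; exists 0, (fun=> 0), (fun=> 0); split.
  - by case.
  - by case.
  - by rewrite big_ord0; apply/matrixP => -[].
  - move=> rho; rewrite big_ord0.
    have -> : rho = 0 by apply/matrixP => -[]. exact: linear0.
pose Om : 'M[C]_(m * m) := gram (fun _ : 'I_1 => (m%:R)^-1)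
  (fun _ s => ((@mxtens_unindex m m s).1 == (@mxtens_unindex m m s).2)%:R).
have minv0 : 0 <= (m%:R : C)^-1 by rewrite invr_ge0 ler0n.
have mnz : (m%:R : C) != 0 by rewrite pnatr_eq0 -lt0n.
have OmE i a j b : Om (mxtens_index (i, a)) (mxtens_index (j, b)) =
    (m%:R)^-1 * ((i == a)%:R * (j == b)%:R).
  rewrite mxE big_ord1 !mxtens_indexK /=.
  by case: (j == b); rewrite /= ?conjC1 ?conjC0.
pose S := (1%:M *t UA) *m Om.
have PS : adjmx (1%:M *t UA) *m S = Om.
  by rewrite /S mulmxA adj1t tensmx_mul mul1mx UAb tens11 mul1mx.
have Sd : Udensity (1%:M *t UA) S.
  split; rewrite /Upos PS; first by apply: psd_gram.
  rewrite gram_tr big_ord1 sum_tens (eq_bigr (fun=> (1 : C))).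
    by rewrite sumr_const card_ord mulVf.
  move=> i _; under eq_bigr => a _ do rewrite mxtens_indexK /=.
  rewrite (bigD1 i) //= big1 ?addr0 ?eqxx ?conjC1 ?mulr1 //.
  by move=> a /negbTE ha; rewrite eq_sym ha mul0r.
have [_ [N [lam [r1 [r2 [lam0 lam1 Hk rhoE]]]]]] := EB m S Sd.
have key i j a b : psi (UA *m delta_mx i j) a b =
    m%:R * \sum_k lam k * (r1 k i j * r2 k a b).
  have blkS : blk S i j = (m%:R)^-1 *: (UA *m delta_mx i j).
    rewrite /S blk_mul scalemxAr; congr (_ *m _).
    apply/matrixP => c d; rewrite mxE; have := OmE i c j d; move=> ->.
    rewrite !mxE (eq_sym c) (eq_sym d).
    by case: (i == c); case: (j == d); rewrite /= ?mulr1 ?mulr0.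
  have := congr1 (fun X : 'M[C]_(m * n) => X (mxtens_index (i, a)) (mxtens_index (j, b))) rhoE.
  rewrite /= ampl_E blkS linearZ mxE summxE => h.
  apply: (mulfI (invr_neq0 mnz)); rewrite [RHS]mulrA mulVf // mul1r h.
  by apply: eq_bigr => k _; rewrite mxE tensmxE.
pose t k := \tr (r1 k).
pose c k := \tr (adjmx UB *m r2 k).
have r1p k : psdmx (r1 k).
  by case: (Hk k) => _ h _; move: h; rewrite /Upos adjmx1 mul1mx.
have r2p k : psdmx (adjmx UB *m r2 k) by case: (Hk k).
have tc k : t k * c k = 1.
  by case: (Hk k) => -[_ h] _ _; move: h; rewrite adj1t tensmx_mul mul1mx tr_tens.
have t0 k : 0 <= t k by apply: psd_tr_ge0.
have tnz k : t k != 0.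
  by apply/eqP => h; move: (tc k); rewrite h mul0r => /eqP; rewrite eq_sym oner_eq0.
have cE k : c k = (t k)^-1.
  by rewrite -[c k]mul1r -(mulVf (tnz k)) -mulrA tc mulr1.
have c0 k : 0 <= c k by rewrite cE invr_ge0.
pose D k := t k *: r2 k.
pose F k := (m%:R * lam k * c k) *: ((r1 k)^T *m adjmx UA).
have FU k : F k *m UA = (m%:R * lam k * c k) *: (r1 k)^T.
  by rewrite -scalemxAl -mulmxA UAb mulmx1.
have trT p (A Y : 'M[C]_p) : \tr (A^T *m Y) = \sum_i \sum_j A i j * Y i j.
  rewrite /mxtrace; under eq_bigr do rewrite mxE.
  rewrite exchange_big; apply: eq_bigr => i _; apply: eq_bigr => j _.
  by rewrite mxE.
have trF k rho : \tr (F k *m rho) * t k =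
    m%:R * lam k * \sum_i \sum_j r1 k i j * (adjmx UA *m rho) i j.
  rewrite -scalemxAl mxtraceZ -mulmxA trT cE; field; exact: tnz.
have hpsi rho : psi rho = \sum_k \tr (F k *m rho) *: D k.
  set Y := adjmx UA *m rho.
  have rhoY : rho = UA *m Y by rewrite /Y mulmxA UAa mul1mx.
  apply/matrixP => a b.
  rewrite [in LHS]rhoY {1}(matrix_sum_delta Y) mulmx_sumr linear_sum summxE.
  under eq_bigr do rewrite mulmx_sumr linear_sum summxE.
  under eq_bigr do under eq_bigr do rewrite -scalemxAr linearZ mxE key !mulr_sumr.
  rewrite summxE.
  under [RHS]eq_bigr do rewrite !mxE mulrA trF -/Y -mulrA mulr_suml mulr_sumr.
  under eq_bigr do rewrite exchange_big.
  rewrite exchange_big; apply: eq_bigr => k _; apply: eq_bigr => i _.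
  rewrite mulr_suml mulr_sumr; apply: eq_bigr => j _; ring.
have G1 : \sum_k F k *m UA = 1%:M.
  have TPG V : \tr ((\sum_k F k *m UA) *m V) = \tr V.
    rewrite -[RHS]TP hpsi mulmx_sumr !raddf_sum /= mulmx_suml raddf_sum /=.
    apply: eq_bigr => k _.
    by rewrite -scalemxAr mxtraceZ -scalemxAr mxtraceZ tc mulr1 mulmxA.
  by apply/matrixP => i j; rewrite -tr_delta TPG -[delta_mx j i]mul1mx tr_delta.
exists N, D, F; split => //.
- move=> k; split; rewrite /Upos -scalemxAr; first exact: psd_scale.
  by rewrite mxtraceZ tc.
- move=> k; rewrite FU; apply: psd_scale; last exact: psd_trmx.
  by apply: mulr_ge0 => //; apply: mulr_ge0 => //; exact: ler0n.
Qed.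
End S2.

Unset Implicit Arguments.

Theorem theorem6p3 (R : realType) (m n : nat)
  (UA : 'M[R[i]]_m) (UB : 'M[R[i]]_n)
  (psi : {linear 'M[R[i]]_m -> 'M[R[i]]_n}) :
  is_unitary_mx UA -> is_unitary_mx UB -> Uchannel UA UB psi ->
  (Uentanglement_breaking UA UB psi <-> UHolevo_form UA UB psi).
Proof.
move=> hUA hUB [_ TP]; split; [exact: EB_holevo | exact: holevo_EB].
Qed.
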